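(* Let $f(\alpha,\beta)$, $g(\alpha,\beta)$, $h(\alpha)$ be $2\pi$-periodic in each argument and suppose there is a constant $c\neq0$ such that for all $\alpha,\beta$: $f(\alpha,\beta)=-f(\beta,\alpha)$, $g(\alpha,\beta)=-g(\beta,\alpha)$, $h(\alpha)h(\alpha+\pi)=c$, $f(\alpha,\beta)f(\alpha+\pi,\beta)=-c$, and $g(\alpha,\beta)=c^{-1}f(\alpha,\beta)h(\alpha)h(\beta)$. Then the quad-equation $$f(\theta,\theta')x_{B'}-g(\theta,\theta')x_B=i\big(h(\theta')x_{W'}-h(\theta)x_W\big)$$ is 3D-consistent (in the sense described in the context) if and only if for all $\alpha,\beta,\gamma$ $$f(\alpha,\beta)h(\alpha)h(\beta)+f(\beta,\gamma)h(\beta)h(\gamma)+f(\gamma,\alpha)h(\gamma)h(\alpha)=f(\alpha,\beta)f(\beta,\gamma)f(\gamma,\alpha),$$ which is equivalent to $$g(\alpha,\beta)+g(\beta,\gamma)+g(\gamma,\alpha)=c^{-1}f(\alpha,\beta)f(\beta,\gamma)f(\gamma,\alpha).$$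
   Context: The quad-equation is imposed on a rhombus with black vertices $B,B'$ and white vertices $W,W'$, where $\theta,\theta'$ are the labels of the edges $B\to W$, $B\to W'$, i.e. $e^{i\theta}=W-B$, $e^{i\theta'}=W'-B$ as points in $\mathbb C$. Under the stated symmetry conditions this equation is the same (up to a nonzero factor) whichever black vertex is taken as $B$ and in whichever order $W,W'$ are taken. 3D-consistency: consider a combinatorial cube with vertices $x_I$, $I\subseteq\{1,2,3\}$, placed at formal points $P_I=\sum_{i\in I}e^{i\alpha_i}$ with $(\alpha_1,\alpha_2,\alpha_3)=(\alpha,\beta,\gamma)$; $x_I$ is black if $|I|$ is even and white otherwise, every edge joins a black and a white vertex, and the edge label $\theta$ of an edge from black $P$ to white $Q$ is defined by $e^{i\theta}=Q-P$. Impose the quad-equation on all six faces. For generic initial values $x_\emptyset,x_1,x_2,x_3$, the three faces containing $x_\emptyset$ determine $x_{12},x_{13},x_{23}$, and then each of the three faces containing $x_{123}$ determines a value of $x_{123}$. The equation is 3D-consistent if these three values of $x_{123}$ coincide for all initial data. *)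

(* Defs.v *)
From mathcomp Require Import all_boot all_order all_algebra.
From mathcomp Require Import complex.
From mathcomp Require Import reals trigo.

Set Implicit Arguments.
Unset Strict Implicit.
Unset Printing Implicit Defensive.

Import GRing.Theory Num.Theory.
Local Open Scope ring_scope.

Definition expi (R : realType) (t : R) : R[i] := Complex (cos t) (sin t).

(* the two angles a, b span a genuine (non-degenerate) rhombus:
   e^{ia} <> +- e^{ib}, i.e. a - b is not an integer multiple of pi *)
Definition nondeg (R : realType) (a b : R) : Prop :=
  forall k : int, a - b != k%:~R * pi.

(* The quad-equation with labels th (edge B -> W) and th' (edge B -> W'):
   f(th,th') x_B' - g(th,th') x_B = i (h(th') x_W' - h(th) x_W) *)
Definition quad (R : realType) (f g : R -> R -> R[i]) (h : R -> R[i])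
  (th th' : R) (xB xB' xW xW' : R[i]) : Prop :=
  f th th' * xB' - g th th' * xB = 'i%C * (h th' * xW' - h th * xW).

Definition face_eq (R : realType) (f g : R -> R -> R[i]) (h : R -> R[i])
  (B B' W W' : R[i]) (xB xB' xW xW' : R[i]) : Prop :=
  forall th th' : R, expi th = W - B -> expi th' = W' - B ->
    quad f g h th th' xB xB' xW xW'.

(* 3D-consistency on the cube with vertices P_I = sum_{i in I} e^{i alpha_i},
   (alpha_1, alpha_2, alpha_3) = (a, b, d).  Black: P_0, P_12, P_13, P_23;
   white: P_1, P_2, P_3, P_123. *)
Definition consistent3D (R : realType) (f g : R -> R -> R[i]) (h : R -> R[i])
  (a b d : R) : Prop :=
  let P1 := expi a in let P2 := expi b in let P3 := expi d in
  let P0 := 0 : R[i] in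
  let P12 := P1 + P2 in let P13 := P1 + P3 in let P23 := P2 + P3 in
  let P123 := P1 + P2 + P3 in
  forall x0 x1 x2 x3 x12 x13 x23 : R[i],
    face_eq f g h P0 P12 P1 P2 x0 x12 x1 x2 ->
    face_eq f g h P0 P13 P1 P3 x0 x13 x1 x3 ->
    face_eq f g h P0 P23 P2 P3 x0 x23 x2 x3 ->
    forall y z w : R[i],
      face_eq f g h P12 P13 P1 P123 x12 x13 x1 y ->
      face_eq f g h P12 P23 P2 P123 x12 x23 x2 z ->
      face_eq f g h P13 P23 P3 P123 x13 x23 x3 w ->
      y = z /\ z = w.

(* Main.v *)
Require Import Defs.
From mathcomp Require Import all_boot all_order all_algebra.
From mathcomp Require Import complex.
From mathcomp Require Import reals trigo.
From mathcomp Require Import ring lra.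
Import Order.TTheory GRing.Theory Num.Theory.
Local Open Scope ring_scope.
Set Implicit Arguments.
Unset Strict Implicit.


Lemma solveL (F : fieldType) (u x k r : F) : u != 0 -> u * x - k = r -> x = (k + r) / u.
Proof. by move=> nz <-; field. Qed.

Lemma solveR (F : fieldType) (j h y m L : F) : j != 0 -> h != 0 ->
  L = j * (h * y - m) -> y = (L / j + m) / h.
Proof. by move=> jn hn ->; field; rewrite jn hn. Qed.

Lemma core (F : fieldType) (j c fab fad fda fbd fbpd fapd fapb gab gad gbd gbpd gapd gapb
   ha hb hd hap hbp x0 x1 x2 x3 x12 x13 x23 y z w : F) :
  j != 0 -> c != 0 -> fab != 0 -> fda != 0 -> fbd != 0 -> ha != 0 -> hb != 0 -> hd != 0 ->
  fab * x12 - gab * x0 = j * (hb * x2 - ha * x1) ->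
  fad * x13 - gad * x0 = j * (hd * x3 - ha * x1) ->
  fbd * x23 - gbd * x0 = j * (hd * x3 - hb * x2) ->
  fbpd * x13 - gbpd * x12 = j * (hd * y - hbp * x1) ->
  fapd * x23 - gapd * x12 = j * (hd * z - hap * x2) ->
  fapb * x23 - gapb * x13 = j * (hb * w - hap * x3) ->
  gab = c^-1 * fab * ha * hb -> gad = c^-1 * fad * ha * hd -> gbd = c^-1 * fbd * hb * hd ->
  gbpd = c^-1 * fbpd * hbp * hd -> gapd = c^-1 * fapd * hap * hd ->
  gapb = c^-1 * fapb * hap * hb ->
  hap = c / ha -> hbp = c / hb -> fad = - fda ->
  fbpd = - c / fbd -> fapd = - c / fad -> fapb = - c / fab ->
  y - z = c / (fab * (- fda) * fbd * hd) * (x1 / hb - x2 / ha) *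
            (fab * ha * hb + fbd * hb * hd + fda * hd * ha - fab * fbd * fda) /\
  z - w = c / (fab * (- fda) * fbd * ha) * (x2 / hd - x3 / hb) *
            (fab * ha * hb + fbd * hb * hd + fda * hd * ha - fab * fbd * fda).
Proof.
move=> jn cn abn dan bdn han hbn hdn E1 E2 E3 E4 E5 E6 G1 G2 G3 G4 G5 G6 Ha Hb Fad Fb Fa Fab.
subst gab gad gbd gbpd gapd gapb.
subst fbpd fapd fapb.
subst hap hbp fad.
have adn : - fda != 0 by rewrite oppr_eq0.
have e12 := solveL abn E1. have e13 := solveL adn E2. have e23 := solveL bdn E3.
have ey := solveR jn hdn E4. have ez := solveR jn hdn E5.
have ew := solveR jn hbn E6.
rewrite ey ez ew e12 e13 e23.
split; field; rewrite ?jn ?cn ?abn ?dan ?bdn ?han ?hbn ?hdn ?adn //.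
Qed.

Lemma expiDpi (R : realType) (t : R) : expi (t + pi) = - expi t.
Proof. by rewrite /expi cosDpi sinDpi. Qed.

Lemma periodZ (R : realType) (T : Type) (F : R -> T) :
  (forall x, F (x + 2 * pi) = F x) -> forall (k : int) x, F (x + k%:~R * (2 * pi)) = F x.
Proof.
move=> hF.
have hn : forall (n : nat) x, F (x + n%:R * (2 * pi)) = F x.
  elim=> [|n IH] x; first by rewrite mul0r addr0.
  by rewrite -natr1 mulrDl mul1r addrA hF IH.
case=> n x; first by rewrite hn.
rewrite NegzE mulrNz pmulrn mulNr.
by rewrite -[in RHS](subrK (n.+1%:R * (2*pi)) x) hn.
Qed.

Lemma cos1_eq0 (R : realType) (r : R) : 0 <= r < 2 * pi -> cos r = 1 -> r = 0.
Proof.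
move=> /andP[r0 r2] cr.
have pi0 := @pi_gt0 R.
case: (lerP r pi) => rp.
  apply: (@cos_inj R); rewrite ?cos0 //; rewrite in_itv /= ?r0 ?rp //.
  by rewrite lexx ltW.
have : 2 * pi - r = 0.
  apply: (@cos_inj R); rewrite ?cos0 //.
  - rewrite in_itv /= subr_ge0 (ltW r2) /=.
    by rewrite lerBlDr mulr2n; lra.
  - by rewrite in_itv /= lexx ltW.
  by rewrite addrC mulr_natl cosD2pi cosN.
lra.
Qed.

Lemma expi_eq (R : realType) (t a : R) : expi t = expi a ->
  exists k : int, t = a + k%:~R * (2 * pi).
Proof.
case=> ct st.
have cs : cos (t - a) = 1 by rewrite cosB ct st -!expr2 cos2Dsin2.
have pi0 := @pi_gt0 R.
have p0 : 0 < 2 * (pi : R) by lra.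
set k := Num.floor ((t - a) / (2 * pi)).
exists k.
have := floor_itv ((t - a) / (2 * pi)); rewrite -/k => /andP[k1 k2].
have k1' : k%:~R * (2*pi) <= t - a by rewrite -ler_pdivlMr.
have k2' : t - a < (k+1)%:~R * (2*pi) by rewrite -ltr_pdivrMr.
rewrite intrD mulrDl mul1r in k2'.
have r0 : 0 <= (t - a) - k%:~R * (2 * pi) by lra.
have r2 : (t - a) - k%:~R * (2 * pi) < 2 * pi by lra.
have := @cos1_eq0 R ((t - a) - k%:~R * (2 * pi)).
rewrite r0 r2 => /(_ isT).
have -> : cos (t - a - k%:~R * (2 * pi)) = cos (t - a).
  by rewrite -(periodZ (F := cos) _ k) ?subrK // => x; rewrite mulr_natl cosD2pi.
move=> /(_ cs) /eqP; rewrite subr_eq0 => /eqP <-.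
by rewrite addrC subrK.
Qed.

Lemma face_iff (R : realType) (f g : R -> R -> R[i]) (h : R -> R[i])
  (hfp : forall a b, f (a + 2 * pi) b = f a b /\ f a (b + 2 * pi) = f a b)
  (hgp : forall a b, g (a + 2 * pi) b = g a b /\ g a (b + 2 * pi) = g a b)
  (hhp : forall a, h (a + 2 * pi) = h a)
  (B B' W W' xB xB' xW xW' : R[i]) (a b : R) :
  expi a = W - B -> expi b = W' - B ->
  face_eq f g h B B' W W' xB xB' xW xW' <-> quad f g h a b xB xB' xW xW'.
Proof.
move=> ea eb; split => [H|Q th th' e1 e2]; first exact: H.
have [k ->] := expi_eq (etrans e1 (esym ea)).
have [l ->] := expi_eq (etrans e2 (esym eb)).
have Pf : forall x y (k l : int), f (x + k%:~R*(2*pi)) (y + l%:~R*(2*pi)) = f x y.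
  move=> x y k' l'.
  rewrite (periodZ (F := f (x + k'%:~R*(2*pi)))); last by move=> z; exact: (hfp _ z).2.
  exact: (periodZ (F := fun u => f u y)) (fun u => (hfp u y).1) k' x.
have Pg : forall x y (k l : int), g (x + k%:~R*(2*pi)) (y + l%:~R*(2*pi)) = g x y.
  move=> x y k' l'.
  rewrite (periodZ (F := g (x + k'%:~R*(2*pi)))); last by move=> z; exact: (hgp _ z).2.
  exact: (periodZ (F := fun u => g u y)) (fun u => (hgp u y).1) k' x.
rewrite /quad Pf Pg !(periodZ (F := h)) //.
Qed.

Lemma nondegC (R : realType) (a b : R) : nondeg a b -> nondeg b a.
Proof.
move=> H k; apply/eqP => e; move/eqP: (H (- k)); apply.
by rewrite intrN mulNr -e opprB.
Qed.

Lemma nondegS (R : realType) (a b : R) : nondeg a b -> nondeg (a + pi) b.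
Proof.
move=> H k; apply/eqP => e; move/eqP: (H (k - 1)); apply.
rewrite intrB mulrBl mul1r -e; ring.
Qed.

Lemma i_neq0 (R : realType) : 'i%C != 0 :> R[i].
Proof. by apply/eqP; case => /eqP; rewrite oner_eq0. Qed.

Lemma solveL' (F : fieldType) (u k r : F) : u != 0 -> u * ((k + r) / u) - k = r.
Proof. by move=> nz; field. Qed.

Lemma solveR' (F : fieldType) (j h m L : F) : j != 0 -> h != 0 ->
  L = j * (h * ((L / j + m) / h) - m).
Proof. by move=> jn hn; field; rewrite jn hn. Qed.

Lemma triple (R : realType) (f g : R -> R -> R[i]) (h : R -> R[i]) (c : R[i])
  (hc : c != 0)
  (hfp : forall a b, f (a + 2 * pi) b = f a b /\ f a (b + 2 * pi) = f a b)
  (hgp : forall a b, g (a + 2 * pi) b = g a b /\ g a (b + 2 * pi) = g a b)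
  (hhp : forall a, h (a + 2 * pi) = h a)
  (hfa : forall a b, nondeg a b -> f a b = - f b a)
  (hh : forall a, h a * h (a + pi) = c)
  (hf : forall a b, nondeg a b -> f a b * f (a + pi) b = - c)
  (hg : forall a b, nondeg a b -> g a b = c^-1 * f a b * h a * h b)
  (a b d : R) (nab : nondeg a b) (nbd : nondeg b d) (nda : nondeg d a) :
  consistent3D f g h a b d <->
  f a b * h a * h b + f b d * h b * h d + f d a * h d * h a
       = f a b * f b d * f d a.
Proof.
have hn : forall x, h x != 0.
  move=> x; apply/eqP => e; move: (hh x); rewrite e mul0r => /esym/eqP.
  by rewrite (negbTE hc).
have fn : forall x y, nondeg x y -> f x y != 0.
  move=> x y N; apply/eqP => e; move: (hf x y N); rewrite e mul0r => /eqP.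
  by rewrite eq_sym oppr_eq0 (negbTE hc).
have hpi : forall x, h (x + pi) = c / h x.
  by move=> x; rewrite -(hh x); field; exact: hn.
have fpi : forall x y, nondeg x y -> f (x + pi) y = - c / f x y.
  by move=> x y N; rewrite -(hf x y N); field; exact: fn.
have nad := nondegC nda.
have i0 := @i_neq0 R.
have e1 : expi a = expi a - 0 by rewrite subr0.
have e2 : expi b = expi b - 0 by rewrite subr0.
have e3 : expi d = expi d - 0 by rewrite subr0.
have e4 : expi (b + pi) = expi a - (expi a + expi b) by rewrite expiDpi; ring.
have e4' : expi d = expi a + expi b + expi d - (expi a + expi b) by ring.
have e5 : expi (a + pi) = expi b - (expi a + expi b) by rewrite expiDpi; ring.
have e6 : expi (a + pi) = expi d - (expi a + expi d) by rewrite expiDpi; ring.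
have e6' : expi b = expi a + expi b + expi d - (expi a + expi d) by ring.
have CORE := fun x0 x1 x2 x3 x12 x13 x23 y z w Q1 Q2 Q3 Q4 Q5 Q6 =>
  @core _ 'i%C c (f a b) (f a d) (f d a) (f b d) (f (b + pi) d) (f (a + pi) d) (f (a + pi) b)
   (g a b) (g a d) (g b d) (g (b + pi) d) (g (a + pi) d) (g (a + pi) b)
   (h a) (h b) (h d) (h (a + pi)) (h (b + pi)) x0 x1 x2 x3 x12 x13 x23 y z w
   i0 hc (fn _ _ nab) (fn _ _ nda) (fn _ _ nbd) (hn _) (hn _) (hn _) Q1 Q2 Q3 Q4 Q5 Q6
   (hg _ _ nab) (hg _ _ nad) (hg _ _ nbd) (hg _ _ (nondegS nbd)) (hg _ _ (nondegS nad))
   (hg _ _ (nondegS nab)) (hpi a) (hpi b) (hfa _ _ nad)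
   (fpi _ _ nbd) (fpi _ _ nad) (fpi _ _ nab).
split.
- move=> H.
  pose x0 : R[i] := 0. pose x1 := h b. pose x2 : R[i] := 0. pose x3 : R[i] := 0.
  pose x12 := (g a b * x0 + 'i%C * (h b * x2 - h a * x1)) / f a b.
  pose x13 := (g a d * x0 + 'i%C * (h d * x3 - h a * x1)) / f a d.
  pose x23 := (g b d * x0 + 'i%C * (h d * x3 - h b * x2)) / f b d.
  pose y := ((f (b + pi) d * x13 - g (b + pi) d * x12) / 'i%C + h (b + pi) * x1) / h d.
  pose z := ((f (a + pi) d * x23 - g (a + pi) d * x12) / 'i%C + h (a + pi) * x2) / h d.
  pose w := ((f (a + pi) b * x23 - g (a + pi) b * x13) / 'i%C + h (a + pi) * x3) / h b.
  have Q1 : quad f g h a b x0 x12 x1 x2 by apply: solveL'; exact: fn.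
  have Q2 : quad f g h a d x0 x13 x1 x3 by apply: solveL'; exact: fn.
  have Q3 : quad f g h b d x0 x23 x2 x3 by apply: solveL'; exact: fn.
  have Q4 : quad f g h (b + pi) d x12 x13 x1 y by apply: solveR'.
  have Q5 : quad f g h (a + pi) d x12 x23 x2 z by apply: solveR'.
  have Q6 : quad f g h (a + pi) b x13 x23 x3 w by apply: solveR'.
  have [yz _] := CORE _ _ _ _ _ _ _ _ _ _ Q1 Q2 Q3 Q4 Q5 Q6.
  have [Eyz _] := H x0 x1 x2 x3 x12 x13 x23
     ((face_iff hfp hgp hhp _ _ _ _ _ e1 e2).2 Q1)
     ((face_iff hfp hgp hhp _ _ _ _ _ e1 e3).2 Q2)
     ((face_iff hfp hgp hhp _ _ _ _ _ e2 e3).2 Q3)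
     y z w
     ((face_iff hfp hgp hhp _ _ _ _ _ e4 e4').2 Q4)
     ((face_iff hfp hgp hhp _ _ _ _ _ e5 e4').2 Q5)
     ((face_iff hfp hgp hhp _ _ _ _ _ e6 e6').2 Q6).
  move: yz; rewrite Eyz subrr => /esym/eqP; rewrite mulf_eq0 => /orP[|].
    rewrite /x1 /x2 mul0r mulfV ?hn // subr0 mulr1.
    have K : c / (f a b * - f d a * f b d * h d) != 0.
      by rewrite mulf_neq0 ?invr_neq0 ?mulf_neq0 ?oppr_eq0 ?fn ?hn.
    by rewrite (negbTE K).
  by rewrite subr_eq0 => /eqP.
- move=> Hid; cbv zeta.
  move=> x0 x1 x2 x3 x12 x13 x23 F1 F2 F3 y z w F4 F5 F6.
  have Q1 := (face_iff hfp hgp hhp _ _ _ _ _ e1 e2).1 F1.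
  have Q2 := (face_iff hfp hgp hhp _ _ _ _ _ e1 e3).1 F2.
  have Q3 := (face_iff hfp hgp hhp _ _ _ _ _ e2 e3).1 F3.
  have Q4 := (face_iff hfp hgp hhp _ _ _ _ _ e4 e4').1 F4.
  have Q5 := (face_iff hfp hgp hhp _ _ _ _ _ e5 e4').1 F5.
  have Q6 := (face_iff hfp hgp hhp _ _ _ _ _ e6 e6').1 F6.
  have [yz zw] := CORE _ _ _ _ _ _ _ _ _ _ Q1 Q2 Q3 Q4 Q5 Q6.
  rewrite Hid subrr !mulr0 in yz zw.
  by split; apply/eqP; rewrite -subr_eq0; apply/eqP.
Qed.
Theorem theorem1 (R : realType) (f g : R -> R -> R[i]) (h : R -> R[i])
  (c : R[i]) :
  c != 0 ->
  (forall a b, f (a + 2 * pi) b = f a b /\ f a (b + 2 * pi) = f a b) ->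
  (forall a b, g (a + 2 * pi) b = g a b /\ g a (b + 2 * pi) = g a b) ->
  (forall a, h (a + 2 * pi) = h a) ->
  (forall a b, nondeg a b -> f a b = - f b a) ->
  (forall a b, nondeg a b -> g a b = - g b a) ->
  (forall a, h a * h (a + pi) = c) ->
  (forall a b, nondeg a b -> f a b * f (a + pi) b = - c) ->
  (forall a b, nondeg a b -> g a b = c^-1 * f a b * h a * h b) ->
  ((forall a b d, nondeg a b -> nondeg b d -> nondeg d a ->
       consistent3D f g h a b d)
   <->
   (forall a b d, nondeg a b -> nondeg b d -> nondeg d a ->
       f a b * h a * h b + f b d * h b * h d + f d a * h d * h a
       = f a b * f b d * f d a))
  /\
  ((forall a b d, nondeg a b -> nondeg b d -> nondeg d a ->
       f a b * h a * h b + f b d * h b * h d + f d a * h d * h a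
       = f a b * f b d * f d a)
   <->
   (forall a b d, nondeg a b -> nondeg b d -> nondeg d a ->
       g a b + g b d + g d a = c^-1 * (f a b * f b d * f d a))).
Proof.
move=> hc hfp hgp hhp hfa hga hh hf hg.
split.
  split => H a b d nab nbd nda.
    by apply/(triple hc hfp hgp hhp hfa hh hf hg nab nbd nda).1; exact: H.
  by apply/(triple hc hfp hgp hhp hfa hh hf hg nab nbd nda).2; exact: H.
split => H a b d nab nbd nda.
  rewrite (hg _ _ nab) (hg _ _ nbd) (hg _ _ nda) -(H a b d nab nbd nda); ring.
have := H a b d nab nbd nda; rewrite (hg _ _ nab) (hg _ _ nbd) (hg _ _ nda) => E.
apply: (mulfI (invr_neq0 hc)); rewrite -E; ring.
Qed.
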